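(* Let $\mathcal H$ be a real Hilbert space and let $f:\mathcal H\to\mathbb R$ be continuously differentiable and $\mu$-strongly convex for some $\mu>0$, with unique minimizer $x^*$. Let $t_0>0$ and let $u:[t_0,+\infty[\to\mathcal H$ be a classical solution of $$\dddot u(t)+3\sqrt\mu\,\ddot u(t)+2\mu\,\dot u(t)+\sqrt\mu\,\nabla f\Big(u(t)+\tfrac{1}{\sqrt\mu}\dot u(t)\Big)=0 .$$ Set $y(t)=u(t)+\frac{1}{\sqrt\mu}\dot u(t)$, $$\mathcal E(t)=f(y(t))-\inf_{\mathcal H}f+\frac12\Big\|\sqrt\mu\,(y(t)-x^* )+\dot u(t)+\tfrac1{\sqrt\mu}\ddot u(t)\Big\|^2,$$ $F(t_0)=f(u(t_0))-\inf_{\mathcal H}f$ and $C=\mathcal E(t_0)e^{\sqrt\mu\,t_0}$. Then for all $t\ge t_0$: $$f(y(t))-\inf_{\mathcal H}f\le \mathcal E(t_0)e^{-\sqrt\mu(t-t_0)};$$ $$f(u(t))-\inf_{\mathcal H}f\le\big(C\sqrt\mu\,t+e^{\sqrt\mu t_0}F(t_0)-C\sqrt\mu\,t_0\big)e^{-\sqrt\mu t};$$ $$\|y(t)-x^*\|^2\le\frac{e^{\sqrt\mu t_0}}{\sqrt\mu}\Big(\sqrt\mu\,\|y(t_0)-x^*\|^2+2\mathcal E(t_0)(t-t_0)\Big)e^{-\sqrt\mu t};$$ $$\|u(t)-x^*\|^2\le\frac{2}{\mu}\big(C\sqrt\mu\,t+e^{\sqrt\mu t_0}F(t_0)-C\sqrt\mu\,t_0\big)e^{-\sqrt\mu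 t}.$$
   Context: $f$ is $\mu$-strongly convex if $f-\frac\mu2\|\cdot\|^2$ is convex. $\dot u,\ddot u,\dddot u$ are time derivatives of $u$. *)

(* Defs.v *)
From HB Require Import structures.
From mathcomp Require Import all_boot all_order all_algebra.
From mathcomp Require Import all_classical all_reals all_analysis.
Set Implicit Arguments. Unset Strict Implicit. Unset Printing Implicit Defensive.
Import Order.TTheory GRing.Theory Num.Theory.
Import numFieldNormedType.Exports.
Local Open Scope classical_set_scope.
Local Open Scope ring_scope.

(* A real Hilbert space: a complete normed space V over R whose norm is
   induced by an inner product [inner]. *)
Definition is_inner_product {R : realType} {V : normedModType R}
  (inner : V -> V -> R) : Prop :=
  (forall x y, inner x y = inner y x) /\
  (forall a x y z, inner (a *: x + y) z = a * inner x z + inner y z) /\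
  (forall x, `|x| ^+ 2 = inner x x).

Definition convex_fun {R : realType} {V : normedModType R} (g : V -> R) : Prop :=
  forall (x y : V) (l : R), 0 <= l -> l <= 1 ->
    g (l *: x + (1 - l) *: y) <= l * g x + (1 - l) * g y.

Definition strongly_convex {R : realType} {V : normedModType R} (mu : R)
  (f : V -> R) : Prop :=
  convex_fun (fun x => f x - mu / 2 * `|x| ^+ 2).

Definition C1_with_gradient {R : realType} {V : normedModType R}
  (inner : V -> V -> R) (f : V -> R) (gradf : V -> V) : Prop :=
  (forall x, differentiable f x) /\
  (forall x h, 'd f x h = inner (gradf x) h) /\
  continuous gradf.

(* Main.v *)
Require Import Defs.
From HB Require Import structures.
From mathcomp Require Import all_boot all_order all_algebra.
From mathcomp Require Import all_classical all_reals all_analysis.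
From mathcomp Require Import ring lra.

Import Order.TTheory GRing.Theory Num.Theory.
Import numFieldNormedType.Exports.
Local Open Scope classical_set_scope.
Local Open Scope ring_scope.
Section Inner.
Context {R : realType} {V : normedModType R} {inner : V -> V -> R}.
Context (Hi : is_inner_product inner).

Lemma innerC x y : inner x y = inner y x.
Proof. by case: Hi. Qed.
Lemma innerDZl a x y z : inner (a *: x + y) z = a * inner x z + inner y z.
Proof. by case: Hi => _ []. Qed.
Lemma normE x : `|x| ^+ 2 = inner x x.
Proof. by case: Hi => _ []. Qed.
Lemma inner0l z : inner 0 z = 0.
Proof. have h := innerDZl 1 0 0 z; rewrite scaler0 addr0 mul1r in h; lra. Qed.
Lemma innerDl x y z : inner (x + y) z = inner x z + inner y z.
Proof. by rewrite -[x]scale1r innerDZl mul1r scale1r. Qed.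
Lemma innerZl a x z : inner (a *: x) z = a * inner x z.
Proof. by rewrite -[a *: x]addr0 innerDZl inner0l addr0. Qed.
Lemma innerNl x z : inner (- x) z = - inner x z.
Proof. by rewrite -scaleN1r innerZl mulN1r. Qed.
Lemma innerBl x y z : inner (x - y) z = inner x z - inner y z.
Proof. by rewrite innerDl innerNl. Qed.
Lemma innerDr x y z : inner z (x + y) = inner z x + inner z y.
Proof. by rewrite !(innerC z) innerDl. Qed.
Lemma innerZr a x z : inner z (a *: x) = a * inner z x.
Proof. by rewrite !(innerC z) innerZl. Qed.
Lemma innerNr x z : inner z (- x) = - inner z x.
Proof. by rewrite !(innerC z) innerNl. Qed.
Lemma innerBr x y z : inner z (x - y) = inner z x - inner z y.
Proof. by rewrite innerDr innerNr. Qed.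
Lemma inner_ge0 x : 0 <= inner x x.
Proof. by rewrite -normE sqr_ge0. Qed.

Lemma polar x y : inner x y = (`|x + y| ^+ 2 - `|x - y| ^+ 2) / 4.
Proof.
rewrite !normE !(innerDl, innerNl, innerDr, innerNr) (innerC y x).
by field.
Qed.

Lemma cvg_inner {T : Type} (F : set_system T) {FF : Filter F} (a b : T -> V) a0 b0 :
  a @ F --> a0 -> b @ F --> b0 ->
  (fun x => inner (a x) (b x)) @ F --> inner a0 b0.
Proof.
move=> ha hb.
have -> : (fun x => inner (a x) (b x)) =
  (fun x => (`|a x + b x| ^+ 2 - `|a x - b x| ^+ 2) / 4).
  by apply: funext => x; rewrite polar.
rewrite polar.
have sq : forall (g : T -> V) (l : V), g @ F --> l -> (fun x => `|g x| ^+ 2) @ F --> (`|l| ^+ 2 : R).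
  move=> g l hg; rewrite expr2.
  have -> : (fun x => `|g x| ^+ 2) = (fun x => `|g x|) \* (fun x => `|g x|).
    by apply: funext => x; rewrite /= expr2.
  by apply: cvgM; apply: cvg_norm.
apply: cvgMr_tmp; apply: cvgB; apply: sq; [apply: cvgD | apply: cvgB] => //.
Qed.


Lemma is_derive_inner (a b : R -> V) (t : R) (da db : V) :
  is_derive t 1 a da -> is_derive t 1 b db ->
  is_derive t 1 (fun x => inner (a x) (b x)) (inner da (b t) + inner (a t) db).
Proof.
move=> [ha hda] [hb hdb].
have bc : (fun h : R => b (h *: 1 + t)) @ 0^' --> b t.
  suff : {for 0, continuous (fun h : R => b (h *: 1 + t))}.
    by move=> /continuous_withinNx; rewrite scale0r add0r.
  exact/differentiable_continuous/derivable1_diffP/(derivable1P _ _ _).1.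
have cq : (fun h : R => h^-1 *: (((fun x => inner (a x) (b x)) \o shift t) (h *: 1)
            - inner (a t) (b t))) @ 0^' --> inner da (b t) + inner (a t) db.
  have -> : (fun h : R => h^-1 *: (((fun x => inner (a x) (b x)) \o shift t) (h *: 1)
            - inner (a t) (b t))) =
      (fun h : R => inner (h^-1 *: ((a \o shift t) (h *: 1) - a t)) (b (h *: 1 + t))
        + inner (a t) (h^-1 *: ((b \o shift t) (h *: 1) - b t))).
    apply: funext => h /=.
    rewrite innerZl innerZr innerBl innerBr /shift /=.
    rewrite -mulrDr; congr (_ * _); lra.
  apply: cvgD.
    apply: cvg_inner => //; rewrite -hda; exact: ha.
  apply: cvg_inner; first exact: cvg_cst.
  rewrite -hdb; exact: hb.
apply: DeriveDef; first by apply/cvg_ex; eexists; exact: cq.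
exact: cvg_lim cq.
Qed.

End Inner.

Lemma is_derive_fcomp (R : realType) (V : normedModType R) (inner : V -> V -> R)
  (f : V -> R) (gradf : V -> V) (g : R -> V) (t : R) (dg : V) :
  C1_with_gradient inner f gradf ->
  is_derive t 1 g dg -> is_derive t 1 (f \o g) (inner (gradf (g t)) dg).
Proof.
move=> [fd [hd _]] [hg hdg].
have dg' : differentiable g t by apply/derivable1_diffP.
have dfg : differentiable (f \o g) t by apply: differentiable_comp.
apply: DeriveDef; first by apply/derivable1_diffP.
by rewrite deriveE // diff_comp //= hd -deriveE // hdg.
Qed.

Lemma dnbhs_right (R : realType) (W : topologicalType) (q : R -> W) (L : W) :
  q @ 0^' --> L -> q @ 0^'+ --> L.
Proof.
move=> h; apply: cvg_trans h => A /nbhs_ballP [e e0 HA].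
apply/nbhs_ballP; exists e => // y ye ypos; apply: HA => //.
by rewrite gt_eqF.
Qed.

Lemma cvg_lin (R : realType) (a b : R) : (fun l => a + b * l) @ 0^'+ --> a.
Proof.
rewrite -[X in _ --> X]addr0 -[X in _ --> _ + X](mulr0 b).
apply: cvgD; first exact: cvg_cst.
apply: cvgMl_tmp; apply: cvg_at_right_filter; exact: cvg_id.
Qed.

Section Convex.
Context {R : realType} {V : normedModType R} {inner : V -> V -> R}
  {f : V -> R} {gradf : V -> V} {mu : R}.
Context (Hi : is_inner_product inner).

Lemma SC (Hsc : strongly_convex mu f) (z x : V) (l : R) : 0 <= l -> l <= 1 ->
  f (l *: z + (1 - l) *: x) <=
  l * f z + (1 - l) * f x - mu / 2 * (l * (1 - l)) * inner (z - x) (z - x).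
Proof.
move=> l0 l1; move: (Hsc z x l l0 l1).
rewrite !(normE Hi) !(innerDl Hi, innerZl Hi, innerNl Hi, innerDr Hi, innerZr Hi, innerNr Hi).
rewrite (innerC Hi x z).
set a := inner z z; set b := inner z x; set c := inner x x.
set p := f _; set fz := f z; set fx := f x.
rewrite -subr_ge0 => h; rewrite -subr_ge0; apply: (le_trans h).
rewrite le_eqVlt; apply/orP; left; apply/eqP; ring.
Qed.

Lemma grad_ineq (HC : C1_with_gradient inner f gradf) (Hsc : strongly_convex mu f) (x z : V) :
  f x + inner (gradf x) (z - x) + mu / 2 * inner (z - x) (z - x) <= f z.
Proof.
case: HC => fd [hd _].
set v := z - x.
have dv : derivable f x v by apply: diff_derivable.
have q : (fun h : R => h^-1 *: ((f \o shift x) (h *: v) - f x)) @ 0^'+ --> inner (gradf x) v.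
  rewrite -hd -deriveE //; apply: dnbhs_right; exact: dv.
have L := @cvg_lin R (f z - f x - mu / 2 * inner v v) (mu / 2 * inner v v).
have := ler_cvg_to q L.
suff H : \forall h \near 0^'+, h^-1 *: ((f \o shift x) (h *: v) - f x) <=
   f z - f x - mu / 2 * inner v v + mu / 2 * inner v v * h.
  move=> /(_ (at_right_proper_filter 0) H); lra.
near=> h.
have h0 : 0 < h by near: h; exact: nbhs_right_gt.
have h1 : h <= 1 by near: h; exact: nbhs_right_le.
have := SC Hsc z x h (ltW h0) h1.
have -> : h *: z + (1 - h) *: x = h *: v + x.
  by rewrite /v scalerBr scalerBl scale1r addrA addrAC.
rewrite /= => hP.
have hX : f (h *: v + x) - f x <= h * (f z - f x - mu / 2 * (1 - h) * inner v v).
  have -> : h * (f z - f x - mu / 2 * (1 - h) * inner v v) =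
    h * f z + (1 - h) * f x - mu / 2 * (h * (1 - h)) * inner v v - f x by ring.
  by rewrite lerD2r.
have -> : f z - f x - mu / 2 * inner v v + mu / 2 * inner v v * h =
  h^-1 * (h * (f z - f x - mu / 2 * (1 - h) * inner v v)).
  by rewrite mulKf ?gt_eqF //; ring.
apply: ler_wpM2l => //; by rewrite invr_ge0 ltW.
Unshelve. all: end_near.
Qed.

Lemma qgrowth (Hsc : strongly_convex mu f) (xs z : V) :
  (forall x, f xs <= f x) ->
  mu / 2 * inner (z - xs) (z - xs) <= f z - f xs.
Proof.
move=> hmin.
set c := mu / 2 * inner (z - xs) (z - xs).
have L := @cvg_lin R c (- c).
have := ler_cvg_to L (cvg_cst (f z - f xs)).
suff H : \forall h \near 0^'+, c + - c * h <= f z - f xs.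
  by move=> /(_ (at_right_proper_filter 0) _ H).
near=> h.
have h0 : 0 < h by near: h; exact: nbhs_right_gt.
have h1 : h <= 1 by near: h; exact: nbhs_right_le.
have := SC Hsc z xs h (ltW h0) h1.
have := hmin (h *: z + (1 - h) *: xs).
move=> a b.
have k : h * (c + - c * h) <= h * (f z - f xs).
  have -> : h * (c + - c * h) = mu / 2 * (h * (1 - h)) * inner (z - xs) (z - xs) by rewrite /c; ring.
  have -> : h * (f z - f xs) = h * f z + (1 - h) * f xs - f xs by ring.
  lra.
by rewrite ler_pM2l in k.
Unshelve. all: end_near.
Qed.
End Convex.

Lemma cmp (R : realType) (g dg : R -> R) (t0 : R) :
  (forall t, t0 < t -> is_derive t 1 g (dg t)) -> (forall t, t0 < t -> dg t <= 0) ->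
  g x @[x --> t0^'+] --> g t0 -> forall t, t0 <= t -> g t <= g t0.
Proof.
move=> hd hle hc t ht.
apply: (@ler0_derive1_nincry R g t0) => //.
- move=> x; rewrite in_itv /= andbT => hx; by case: (hd x hx).
- move=> x; rewrite in_itv /= andbT => hx; rewrite derive1E.
  by case: (hd x hx) => _ ->; exact: hle.
- apply/continuous_within_itvcyP; split => //.
  move=> x; rewrite in_itv /= andbT => hx.
  apply: differentiable_continuous; apply/derivable1_diffP.
  by case: (hd x hx).
Qed.

Lemma is_derive_lin (R : realType) (k t : R) : is_derive t 1 (fun x : R => k * x) k.
Proof.
have h := @is_deriveZ R R^o R^o id k t 1 1 (is_derive_id t 1).
apply: is_derive_eq h _; exact: mulr1.
Qed.

Lemma is_derive_expS (R : realType) (k t : R) :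
  is_derive t 1 (fun x : R => expR (k * x)) (expR (k * t) * k).
Proof.
have := @is_derive1_comp R expR (fun x => k * x) t (expR (k * t)) k.
apply=> //; exact: is_derive_lin.
Qed.

Section Keys.
Context {R : realType} {V : normedModType R} {inner : V -> V -> R}.
Context (Hi : is_inner_product inner).

Lemma key1 (a dy g dw : V) (s fy fxs : R) : 0 < s ->
  (forall z, inner dw z = - s * inner dy z - inner g z) ->
  fy - inner g a + (s * s) / 2 * inner a a <= fxs ->
  s * (fy - fxs + 2^-1 * inner (s *: a + dy) (s *: a + dy)) +
  (inner g dy + 2^-1 * (inner dw (s *: a + dy) + inner (s *: a + dy) dw)) <= 0.
Proof.
move=> s0 hdw hg.
rewrite (innerC Hi (s *: a + dy) dw) hdw.
rewrite !(innerDl Hi, innerZl Hi, innerDr Hi, innerZr Hi) (innerC Hi dy a).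
have dd := inner_ge0 Hi dy.
have H : s * (fy - inner g a + (s * s) / 2 * inner a a - fxs) - s / 2 * inner dy dy <= 0.
  have h1 : s * (fy - inner g a + (s * s) / 2 * inner a a - fxs) <= 0.
    by rewrite pmulr_rle0 // subr_le0.
  have h2 : 0 <= s / 2 * inner dy dy by rewrite mulr_ge0 // divr_ge0 // ltW.
  lra.
apply: le_trans H; rewrite le_eqVlt; apply/orP; left; apply/eqP; by field.
Qed.

Lemma key3 (a dy : V) (s e0 : R) : 0 < s -> 0 <= e0 ->
  s * inner a a + (inner dy a + inner a dy) <=
  2 / s * (e0 + 2^-1 * inner (s *: a + dy) (s *: a + dy)).
Proof.
move=> s0 e00.
have dd := inner_ge0 Hi dy.
rewrite !(innerDl Hi, innerZl Hi, innerDr Hi, innerZr Hi) (innerC Hi dy a).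
have h : 0 <= 2 / s * e0 + s^-1 * inner dy dy.
  by rewrite addr_ge0 // mulr_ge0 // ?divr_ge0 // ?invr_ge0 // ltW.
apply: le_trans (_ : _ <= s * inner a a + (inner a dy + inner a dy) + (2 / s * e0 + s^-1 * inner dy dy)) _.
  lra.
rewrite le_eqVlt; apply/orP; left; apply/eqP; field; lra.
Qed.

End Keys.

Theorem theorem5p1 (R : realType) (V : completeNormedModType R)
  (inner : V -> V -> R) (f : V -> R) (gradf : V -> V) (mu : R) (xs : V)
  (t0 : R) (u u1 u2 u3 : R -> V) :
  is_inner_product inner ->
  C1_with_gradient inner f gradf ->
  0 < mu -> strongly_convex mu f ->
  (forall x, f xs <= f x) ->
  0 < t0 ->
  (* u is a classical solution on [t0, +oo[ : u1, u2, u3 are its first three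
     derivatives on ]t0, +oo[, and u, u1, u2 are right-continuous at t0 *)
  (forall t, t0 < t -> is_derive t 1 u (u1 t)) ->
  (forall t, t0 < t -> is_derive t 1 u1 (u2 t)) ->
  (forall t, t0 < t -> is_derive t 1 u2 (u3 t)) ->
  u x @[x --> t0^'+] --> u t0 ->
  u1 x @[x --> t0^'+] --> u1 t0 ->
  u2 x @[x --> t0^'+] --> u2 t0 ->
  (forall t, t0 < t ->
     u3 t + (3 * Num.sqrt mu) *: u2 t + (2 * mu) *: u1 t
     + Num.sqrt mu *: gradf (u t + (Num.sqrt mu)^-1 *: u1 t) = 0) ->
  let s := Num.sqrt mu in
  let m := inf (range f) in
  let y := fun t => u t + s^-1 *: u1 t in
  let E := fun t => f (y t) - m
                    + 2^-1 * `| s *: (y t - xs) + u1 t + s^-1 *: u2 t | ^+ 2 in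
  let F0 := f (u t0) - m in
  let C := E t0 * expR (s * t0) in
  forall t, t0 <= t ->
    [/\ f (y t) - m <= E t0 * expR (- (s * (t - t0))),
        f (u t) - m <= (C * s * t + expR (s * t0) * F0 - C * s * t0)
                       * expR (- (s * t)),
        `| y t - xs | ^+ 2 <= expR (s * t0) / s
                              * (s * `| y t0 - xs | ^+ 2 + 2 * E t0 * (t - t0))
                              * expR (- (s * t))
      & `| u t - xs | ^+ 2 <= 2 / mu
                              * (C * s * t + expR (s * t0) * F0 - C * s * t0)
                              * expR (- (s * t))].
Proof.
move=> Hi HC mu0 Hsc hmin t00 du du1 du2 cu cu1 cu2 ode s m y E F0 C t ht.
have s0 : 0 < s by rewrite sqrtr_gt0.
have ss : s * s = mu by rewrite -expr2 sqr_sqrtr // ltW.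
have mE : m = f xs.
  apply/eqP; rewrite eq_le; apply/andP; split.
    apply: ge_inf; last by exists xs.
    by exists (f xs) => _ [x _ <-].
  apply: lb_le_inf; first by exists (f xs), xs.
  by move=> _ [x _ <-].
pose dy t := u1 t + s^-1 *: u2 t.
pose w t := s *: (y t - xs) + dy t.
pose dw t := s *: dy t + (u2 t + s^-1 *: u3 t).
pose Ef t := f (y t) - f xs + 2^-1 * inner (w t) (w t).
have EE : E = Ef.
  apply: funext => x; rewrite /E /Ef mE (normE Hi) /w /dy !addrA //.
have dyd : forall t, t0 < t -> is_derive t 1 y (dy t).
  move=> x hx; rewrite /y /dy.
  exact: (is_deriveD (du x hx) (is_deriveZ (s^-1) (du1 x hx))).
have wd : forall t, t0 < t -> is_derive t 1 w (dw t).
  move=> x hx; rewrite /w /dw.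
  have h := is_deriveD (is_deriveZ s (is_deriveB (dyd x hx) (is_derive_cst xs x 1)))
    (is_deriveD (du1 x hx) (is_deriveZ (s^-1) (du2 x hx))).
  by apply: is_derive_eq h _; rewrite subr0.
have dEf : forall t, t0 < t -> is_derive t 1 Ef
    (inner (gradf (y t)) (dy t) + 2^-1 * (inner (dw t) (w t) + inner (w t) (dw t))).
  move=> x hx.
  have h1 := is_derive_fcomp _ _ _ _ _ _ _ _ HC (dyd x hx).
  have h2 := is_derive_inner Hi _ _ _ _ _ (wd x hx) (wd x hx).
  have h := is_deriveD (is_deriveB h1 (is_derive_cst (f xs) x 1)) (is_deriveZ (2^-1) h2).
  by apply: is_derive_eq h _; rewrite subr0.
have hdw : forall t, t0 < t -> forall z,
    inner (dw t) z = - s * inner (dy t) z - inner (gradf (y t)) z.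
  move=> x hx z.
  have e := congr1 (fun v => inner v z) (ode x hx).
  change (inner (u3 x + (3 * s) *: u2 x + (2 * mu) *: u1 x + s *: gradf (y x)) z
    = inner 0 z) in e.
  rewrite (inner0l Hi) !(innerDl Hi, innerZl Hi) in e.
  have er : inner (u3 x) z = - (3 * s * inner (u2 x) z + 2 * mu * inner (u1 x) z
     + s * inner (gradf (y x)) z) by lra.
  rewrite /dw /dy !(innerDl Hi, innerZl Hi) er -ss; field; lra.
have cid : (fun x : R => x) @ t0^'+ --> t0 by apply: cvg_at_right_filter; exact: cvg_id.
have cy : y x @[x --> t0^'+] --> y t0.
  by apply: cvgD => //; apply: cvgZ => //; exact: cvg_cst.
have cdy : dy x @[x --> t0^'+] --> dy t0.
  by apply: cvgD => //; apply: cvgZ => //; exact: cvg_cst.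
have cw : w x @[x --> t0^'+] --> w t0.
  apply: cvgD => //; apply: cvgZ; first exact: cvg_cst.
  by apply: cvgB => //; exact: cvg_cst.
have fcont : forall v, {for v, continuous f}.
  by move=> v; apply: differentiable_continuous; case: HC.
have cfy : f (y x) @[x --> t0^'+] --> f (y t0) by apply: (continuous_cvg _ _ cy).
have cfu : f (u x) @[x --> t0^'+] --> f (u t0) by apply: (continuous_cvg _ _ cu).
have cEf : Ef x @[x --> t0^'+] --> Ef t0.
  apply: cvgD; first by apply: cvgB => //; exact: cvg_cst.
  by apply: cvgMl_tmp; apply: cvg_inner.
have cexp : expR (s * x) @[x --> t0^'+] --> expR (s * t0).
  apply: (continuous_cvg _ _ (f := fun x => s * x)); first exact: continuous_expR.
  exact: cvgMl_tmp.
have P1 : forall t, t0 <= t -> expR (s * t) * Ef t <= expR (s * t0) * Ef t0.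
  apply: (cmp _ (fun x : R => expR (s * x) * Ef x)
    (fun x => expR (s * x) * (inner (gradf (y x)) (dy x) + 2^-1 * (inner (dw x) (w x)
       + inner (w x) (dw x))) + Ef x * (expR (s * x) * s))).
  - move=> x hx; have h := is_deriveM (is_derive_expS _ s x) (dEf x hx); exact h.
  - move=> x hx.
    have G := grad_ineq Hi HC Hsc (y x) xs.
    rewrite -(opprB (y x)) (innerNr Hi) (innerNl Hi) (innerNr Hi) opprK -ss in G.
    have K := key1 Hi (y x - xs) (dy x) (gradf (y x)) (dw x) s (f (y x)) (f xs) s0 (hdw x hx).
    have K' := K ltac:(lra).
    have -> : expR (s * x) * (inner (gradf (y x)) (dy x) + 2^-1 * (inner (dw x) (w x) + inner (w x) (dw x)))
      + Ef x * (expR (s * x) * s) = expR (s * x) * (s * Ef x + (inner (gradf (y x)) (dy x) + 2^-1 * (inner (dw x) (w x) + inner (w x) (dw x)))) by ring.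
    by rewrite pmulr_rle0 ?expR_gt0.
  - exact: cvgM.
set C' := expR (s * t0) * Ef t0.
have EfE : forall x, t0 <= x -> f (y x) - f xs <= Ef x.
  move=> x _; rewrite /Ef lerDl mulr_ge0 // ?invr_ge0 //; exact: inner_ge0.
have P2 : forall t, t0 <= t ->
    expR (s * t) * (f (u t) - f xs) - s * C' * t <= expR (s * t0) * (f (u t0) - f xs) - s * C' * t0.
  apply: (cmp _ (fun x : R => expR (s * x) * (f (u x) - f xs) - s * C' * x)
    (fun x => expR (s * x) * (inner (gradf (u x)) (u1 x) - 0) + (f (u x) - f xs) * (expR (s * x) * s) - s * C')).
  - move=> x hx.
    have h := is_deriveB (is_deriveM (is_derive_expS _ s x)
       (is_deriveB (is_derive_fcomp _ _ _ _ _ _ _ _ HC (du x hx)) (is_derive_cst (f xs) x 1)))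
       (is_derive_lin _ (s * C') x).
    exact h.
  - move=> x hx.
    have G := grad_ineq Hi HC Hsc (u x) (y x).
    have yu : y x - u x = s^-1 *: u1 x by rewrite /y addrC addKr.
    rewrite yu (innerZr Hi) in G.
    have nn : 0 <= mu / 2 * inner (s^-1 *: u1 x) (s^-1 *: u1 x).
      by rewrite mulr_ge0 ?(inner_ge0 Hi) // divr_ge0 // ltW.
    have h1 := EfE x (ltW hx).
    have h2 := P1 x (ltW hx).
    have ex := expR_gt0 (s * x).
    have A : inner (gradf (u x)) (u1 x) = s * (s^-1 * inner (gradf (u x)) (u1 x)).
      by rewrite mulrA mulfV ?gt_eqF // mul1r.
    rewrite subr0 A.
    set B := s^-1 * inner (gradf (u x)) (u1 x) in G A *.
    have h3 : B + f (u x) - f xs <= Ef x by lra.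
    have h4 : expR (s * x) * s * (B + f (u x) - f xs) <= expR (s * x) * s * Ef x.
      by rewrite ler_wpM2l // mulr_ge0 // ltW.
    have h5 : s * (expR (s * x) * Ef x) <= s * C' by rewrite ler_wpM2l // ltW.
    have -> : expR (s * x) * (s * B) + (f (u x) - f xs) * (expR (s * x) * s) - s * C'
      = expR (s * x) * s * (B + f (u x) - f xs) - s * C' by ring.
    rewrite (_ : expR (s * x) * s * Ef x = s * (expR (s * x) * Ef x)) in h4; last by ring.
    lra.
  - apply: cvgB; last exact: cvgMl_tmp.
    by apply: cvgM => //; apply: cvgB => //; exact: cvg_cst.
have P3 : forall t, t0 <= t ->
    expR (s * t) * inner (y t - xs) (y t - xs) - 2 * C' / s * t <=
    expR (s * t0) * inner (y t0 - xs) (y t0 - xs) - 2 * C' / s * t0.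
  apply: (cmp _ (fun x : R => expR (s * x) * inner (y x - xs) (y x - xs) - 2 * C' / s * x)
    (fun x => expR (s * x) * (inner (dy x - 0) (y x - xs) + inner (y x - xs) (dy x - 0))
       + inner (y x - xs) (y x - xs) * (expR (s * x) * s) - 2 * C' / s)).
  - move=> x hx.
    have hy := is_deriveB (dyd x hx) (is_derive_cst xs x 1).
    have h := is_deriveB (is_deriveM (is_derive_expS _ s x)
       (is_derive_inner Hi _ _ _ _ _ hy hy)) (is_derive_lin _ (2 * C' / s) x).
    exact h.
  - move=> x hx.
    rewrite !subr0.
    have K := key3 Hi (y x - xs) (dy x) s (f (y x) - f xs) s0.
    have K' : s * inner (y x - xs) (y x - xs) + (inner (dy x) (y x - xs) + inner (y x - xs) (dy x))
       <= 2 / s * Ef x.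
      apply: K; rewrite subr_ge0; exact: hmin.
    have ex := expR_gt0 (s * x).
    have h2 := P1 x (ltW hx).
    set H := inner (y x - xs) (y x - xs) in K' *.
    set D := inner (dy x) (y x - xs) + inner (y x - xs) (dy x) in K' *.
    have h4 : expR (s * x) * (s * H + D) <= expR (s * x) * (2 / s * Ef x).
      by rewrite ler_wpM2l // ltW.
    have h5 : 2 / s * (expR (s * x) * Ef x) <= 2 / s * C'.
      by rewrite ler_wpM2l // divr_ge0 // ltW.
    rewrite (_ : expR (s * x) * (2 / s * Ef x) = 2 / s * (expR (s * x) * Ef x)) in h4; last by ring.
    rewrite (_ : expR (s * x) * D + H * (expR (s * x) * s) - 2 * C' / s =
       expR (s * x) * (s * H + D) - 2 / s * C'); last by ring.
    lra.
  - apply: cvgB; last exact: cvgMl_tmp.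
    apply: cvgM => //; apply: cvg_inner => //; apply: cvgB => //; exact: cvg_cst.
have divE : forall (e X Y : R), 0 < e -> e * X <= Y -> X <= Y * e^-1.
  move=> e X Y e0 h.
  have -> : X = (e * X) * e^-1 by field; rewrite gt_eqF.
  by rewrite ler_wpM2r // invr_ge0 ltW.
have eN : forall x : R, expR (- x) = (expR x)^-1 by move=> x; rewrite expRN.
have CE : C = C' by rewrite /C EE /C' mulrC.
have Ft : f (u t) - f xs <= (C * s * t + expR (s * t0) * F0 - C * s * t0) * expR (- (s * t)).
  rewrite eN CE /F0 mE; apply: divE; first exact: expR_gt0.
  have := P2 t ht; lra.
have Fy : f (y t) - f xs <= C' * expR (- (s * t)).
  rewrite eN; apply: divE; first exact: expR_gt0.
  apply: le_trans (P1 t ht); rewrite ler_wpM2l ?(ltW (expR_gt0 _)) //; exact: EfE.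
split.
- rewrite mE EE (_ : - (s * (t - t0)) = s * t0 + - (s * t)); last by ring.
  rewrite expRD mulrA [Ef t0 * _]mulrC; exact: Fy.
- by rewrite mE.
- rewrite !(normE Hi) EE eN.
  have := P3 t ht => h.
  have h' : inner (y t - xs) (y t - xs) <= (expR (s * t0) * inner (y t0 - xs) (y t0 - xs)
      - 2 * C' / s * t0 + 2 * C' / s * t) * (expR (s * t))^-1.
    apply: divE; first exact: expR_gt0.
    lra.
  apply: (le_trans h'); rewrite le_eqVlt; apply/orP; left; apply/eqP.
  rewrite /C'; field. all: try by rewrite /= ?gt_eqF ?expR_gt0.
- rewrite (normE Hi).
  have Q := qgrowth Hi Hsc xs (u t) hmin.
  rewrite -mE in Ft.
  rewrite -mulrA.
  have -> : inner (u t - xs) (u t - xs) = 2 / mu * (mu / 2 * inner (u t - xs) (u t - xs)).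
    by field; rewrite gt_eqF.
  rewrite ler_wpM2l ?divr_ge0 ?(ltW mu0) //.
  apply: (le_trans Q); rewrite -mE; exact: Ft.
Qed.
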